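(* Let $n\ge1$ and let $\mathcal{G}=(\mathcal{V},\mathcal{E})$ be the multigraph with vertex set $\mathcal{V}=\{0,\ldots,n\}$ and, for each $i\in\{1,\ldots,n\}$, exactly two parallel edges $e_i^{(0)},e_i^{(1)}$ between vertex $0$ and vertex $i$ (and no other edges). Let $\epsilon,\delta\ge0$ and $\alpha\ge0$, and let $\mathcal{A}$ be an algorithm that is $(\epsilon,\delta)$-differentially private on $\mathcal{G}$ and that on every input $w:\mathcal{E}\to\{0,1\}$ produces a spanning tree whose weight is in expectation at most $\alpha$ greater than the minimum spanning tree weight. Then there exists a $(2\epsilon,(1+e^{\epsilon})\delta)$-differentially private algorithm $\mathcal{B}$ which on every input $x\in\{0,1\}^n$ produces $y\in\{0,1\}^n$ such that the expected Hamming distance $d_H(x,y)$ is at most $\alpha$.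
   Context: Private edge weight model: for a graph $\mathcal{G}=(\mathcal{V},\mathcal{E})$, a weight function is $w:\mathcal{E}\to\mathbb{R}$. Two weight functions $w,w'$ are neighboring if $\sum_{e\in\mathcal{E}}|w(e)-w'(e)|\le1$. A randomized algorithm $\mathcal{A}$ on weight functions is $(\epsilon,\delta)$-differentially private on $\mathcal{G}$ if for all neighboring $w,w'$ and all sets $S$ of outputs, $\Pr[\mathcal{A}(w)\in S]\le e^{\epsilon}\Pr[\mathcal{A}(w')\in S]+\delta$. A randomized algorithm $\mathcal{B}$ with inputs in $\{0,1\}^n$ is $(\epsilon',\delta')$-differentially private if for all $x,x'\in\{0,1\}^n$ differing in exactly one coordinate and all sets $S$ of outputs, $\Pr[\mathcal{B}(x)\in S]\le e^{\epsilon'}\Pr[\mathcal{B}(x')\in S]+\delta'$. $d_H$ denotes Hamming distance. *)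

(* Defs.v *)
From HB Require Import structures.
From mathcomp Require Import all_boot all_order all_algebra.
From mathcomp Require Import all_classical all_reals all_analysis.
Set Implicit Arguments. Unset Strict Implicit. Unset Printing Implicit Defensive.
Import Order.TTheory GRing.Theory Num.Theory.
Local Open Scope ring_scope.

(* Edges: 'I_n * bool; the edge (i, b) is e_{i+1}^{(b)}, joining vertex 0
   and vertex i+1.  So there are exactly two parallel edges between 0 and
   each vertex j in {1..n}, and no other edges. *)
Definition Vtx (n : nat) := 'I_n.+1.
Definition Edge (n : nat) := ('I_n * bool)%type.

Definition far_end (n : nat) (e : Edge n) : 'I_n.+1 := lift ord0 e.1.

Definition incident (n : nat) (e : Edge n) (u v : 'I_n.+1) : bool :=
  ((u == ord0) && (v == far_end e)) || ((v == ord0) && (u == far_end e)).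

Definition adj (n : nat) (T : {set Edge n}) : rel 'I_n.+1 :=
  fun u v => [exists e in T, incident e u v].

Definition connected_sub (n : nat) (T : {set Edge n}) : bool :=
  [forall u, forall v, connect (adj T) u v].

Definition spanning_tree (n : nat) (T : {set Edge n}) : bool :=
  connected_sub T && (#|T| == n)%N.

Definition tree_weight (R : realType) (n : nat) (w : Edge n -> R)
  (T : {set Edge n}) : R := \sum_(e in T) w e.

(* ---------- Randomized algorithms with finite output space ----------
   A randomized algorithm with inputs in I and outputs in the finite type O
   is a map I -> (probability mass function on O). *)
Definition is_distr (R : realType) (O : finType) (p : O -> R) : Prop :=
  (forall o, 0 <= p o) /\ \sum_o p o = 1.

Definition Prob (R : realType) (O : finType) (p : O -> R) (S : {set O}) : R :=
  \sum_(o in S) p o.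

Definition edge_neighboring (R : realType) (n : nat) (w w' : Edge n -> R) : Prop :=
  \sum_e `|w e - w' e| <= 1.

Definition edge_DP (R : realType) (n : nat) (O : finType)
  (A : (Edge n -> R) -> O -> R) (eps delta : R) : Prop :=
  forall w w' : Edge n -> R, edge_neighboring w w' ->
  forall S : {set O}, Prob (A w) S <= expR eps * Prob (A w') S + delta.

Definition hamming (n : nat) (x y : {ffun 'I_n -> bool}) : nat :=
  #|[set i | x i != y i]|.

Definition bit_DP (R : realType) (n : nat) (O : finType)
  (B : {ffun 'I_n -> bool} -> O -> R) (eps delta : R) : Prop :=
  forall x x' : {ffun 'I_n -> bool}, hamming x x' = 1%N ->
  forall S : {set O}, Prob (B x) S <= expR eps * Prob (B x') S + delta.

Definition binary_weight (R : realType) (n : nat) (w : Edge n -> R) : Prop :=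
  forall e, w e = 0 \/ w e = 1.

(* Main.v *)
Require Import Defs.
From HB Require Import structures.
From mathcomp Require Import all_boot all_order all_algebra.
From mathcomp Require Import all_classical all_reals all_analysis.
From mathcomp Require Import ring.
Import Order.TTheory GRing.Theory Num.Theory.
Local Open Scope ring_scope.

Definition wx (R : realType) (n : nat) (x : {ffun 'I_n -> bool}) (e : Edge n) : R :=
  ((e.2 != x e.1) : nat)%:R.

Definition dec (n : nat) (T : {set Edge n}) : {ffun 'I_n -> bool} :=
  [ffun i => (i, true) \in T].

Arguments dec {n}.
Arguments wx R {n}.

Lemma sum_edge (R : realType) n (F : Edge n -> R) :
  \sum_e F e = \sum_i \sum_b F (i, b).
Proof. by rewrite pair_big /=; apply: eq_big => [[i b]|[i b] _]. Qed.

Lemma ham_sum (R : realType) n (x y : {ffun 'I_n -> bool}) :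
  (hamming x y)%:R = \sum_i ((x i != y i) : nat)%:R :> R.
Proof.
have -> : \sum_i ((x i != y i) : nat)%:R = \sum_(i in [set i | x i != y i]) (1:R).
  rewrite [RHS]big_mkcond; apply: eq_bigr => i _; rewrite inE; by case: (x i != y i).
by rewrite sumr_const.
Qed.

Lemma st_edge n (T : {set Edge n}) : spanning_tree T ->
  forall i, exists b, (i, b) \in T.
Proof.
case/andP => /forallP Hc _ i.
have := (forallP (Hc ord0)) (lift ord0 i).
case/connectP => p; case/lastP: p => [|p z] /=.
  move=> _ H; have := neq_lift ord0 i; by rewrite H eqxx.
rewrite rcons_path last_rcons => /andP [_ Hadj] Hz; subst z.
case/existsP: Hadj => e /andP [He]; rewrite /incident /far_end.
case/orP => /andP [H1 H2].
  move/eqP: H2 => /lift_inj H2; exists e.2; by rewrite H2 -surjective_pairing.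
by move/eqP: H1 => H1; have := neq_lift ord0 i; rewrite H1 eqxx.
Qed.

Lemma T0_st n (x : {ffun 'I_n -> bool}) :
  spanning_tree [set (i, x i) | i : 'I_n].
Proof.
apply/andP; split; last first.
  rewrite card_imset ?card_ord //; by move=> i j [].
set T0 := [set _ | _ : 'I_n].
have H0 : forall v, connect (adj T0) ord0 v /\ connect (adj T0) v ord0.
  move=> v; case: (unliftP ord0 v) => [j ->|->]; last by split; apply: connect0.
  have He : (j, x j) \in T0 by apply/imsetP; exists j.
  split; apply: connect1; apply/existsP; exists (j, x j); rewrite He /= /incident /far_end /=;
    by rewrite eqxx.
apply/forallP => u; apply/forallP => v.
apply: connect_trans (proj2 (H0 u)) (proj1 (H0 v)).
Qed.

Lemma ham_le_tw (R : realType) n (x : {ffun 'I_n -> bool}) (T : {set Edge n}) :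
  (forall i, exists b, (i, b) \in T) ->
  (hamming x (dec T))%:R <= tree_weight (wx R x) T.
Proof.
move=> HT; rewrite ham_sum /tree_weight [X in _ <= X]big_mkcond /=.
rewrite sum_edge.
apply: ler_sum => i _; rewrite big_bool /= /wx /dec ffunE /=.
case: (HT i) => b Hb.
case: b Hb; case E1: ((i, true) \in T); case E2: ((i, false) \in T); case: (x i);
  rewrite /= ?E1 ?E2 //= ?addr0 ?add0r ?lexx ?ler0n // => _.
Qed.

Lemma sum_dec (R : realType) n (f : {set Edge n} -> R) (S : {set {ffun 'I_n -> bool}}) :
  \sum_(y in S) \sum_(T | dec T == y) f T = \sum_(T in [set T | dec T \in S]) f T.
Proof.
rewrite (partition_big (@dec n) (mem S)) /=; last by move=> T; rewrite inE.
apply: eq_bigr => y Hy; apply: eq_bigl => T; rewrite inE.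
by case E: (dec T == y); rewrite ?andbF // (eqP E) Hy.
Qed.

Lemma sum_dec_all (R : realType) n (F : {set Edge n} -> {ffun 'I_n -> bool} -> R) :
  \sum_y \sum_(T | dec T == y) F T y = \sum_T F T (dec T).
Proof.
rewrite (partition_big (@dec n) xpredT) //=.
apply: eq_bigr => y _; apply: eq_big => T //= /eqP <- //.
Qed.

Lemma wx_dist (R : realType) n (x x' : {ffun 'I_n -> bool}) : hamming x x' = 1%N ->
  \sum_e `|wx R x e - wx R x' e| <= 2.
Proof.
move=> H.
have -> : 2 = (2 * hamming x x')%:R :> R by rewrite H.
rewrite natrM ham_sum mulr_sumr.
rewrite sum_edge.
apply: ler_sum => i _; rewrite big_bool /wx /=.
by case: (x i); case: (x' i); rewrite /= ?subrr ?normr0 ?addr0 ?mulr0 ?mulr1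
   ?sub0r ?subr0 ?normrN ?normr1 ?lexx.
Qed.

Theorem lemmaB2 (R : realType) (n : nat) (hn : (0 < n)%N)
  (eps delta alpha : R) (heps : 0 <= eps) (hdelta : 0 <= delta)
  (halpha : 0 <= alpha)
  (A : (Edge n -> R) -> {set Edge n} -> R)
  (hAdistr : forall w, is_distr (A w))
  (hADP : edge_DP A eps delta)
  (hAtree : forall w, binary_weight w ->
     forall T, A w T != 0 -> spanning_tree T)
  (hAacc : forall w, binary_weight w ->
     forall T0, spanning_tree T0 ->
     \sum_T A w T * tree_weight w T <= tree_weight w T0 + alpha) :
  exists B : {ffun 'I_n -> bool} -> {ffun 'I_n -> bool} -> R,
    (forall x, is_distr (B x)) /\
    bit_DP B (2 * eps) ((1 + expR eps) * delta) /\
    (forall x, \sum_y B x y * (hamming x y)%:R <= alpha).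
Proof.
have bin : forall x : {ffun 'I_n -> bool}, binary_weight (wx R x).
  by move=> x e; rewrite /wx; case: (e.2 != x e.1); [right|left].
exists (fun x y => \sum_(T | dec T == y) A (wx R x) T).
split; [|split].
- move=> x; split.
    move=> y; apply: sumr_ge0 => T _; exact: (proj1 (hAdistr _)).
  have := @sum_dec R n (A (wx R x)) [set: {ffun 'I_n -> bool}].
  under eq_bigl do rewrite inE.
  move=> ->; rewrite -(proj2 (hAdistr (wx R x))); apply: eq_bigl => T; by rewrite !inE.
- move=> x x' Hxx' S; rewrite /Prob !sum_dec.
  set S' := [set T | _].
  pose wm e := (wx R x e + wx R x' e) / 2.
  have D := @wx_dist R n x x' Hxx'.
  have N1 : edge_neighboring (wx R x) wm.
    rewrite /edge_neighboring.
    have -> : \sum_e `|wx R x e - wm e| = (\sum_e `|wx R x e - wx R x' e|) / 2.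
      rewrite mulr_suml; apply: eq_bigr => e _; rewrite /wm.
      have -> : wx R x e - (wx R x e + wx R x' e) / 2 = (wx R x e - wx R x' e) / 2 by field.
      by rewrite normrM [`|2^-1|]ger0_norm // invr_ge0 ler0n.
    by rewrite ler_pdivrMr // mul1r.
  have N2 : edge_neighboring wm (wx R x').
    rewrite /edge_neighboring.
    have -> : \sum_e `|wm e - wx R x' e| = (\sum_e `|wx R x e - wx R x' e|) / 2.
      rewrite mulr_suml; apply: eq_bigr => e _; rewrite /wm.
      have -> : (wx R x e + wx R x' e) / 2 - wx R x' e = (wx R x e - wx R x' e) / 2 by field.
      by rewrite normrM [`|2^-1|]ger0_norm // invr_ge0 ler0n.
    by rewrite ler_pdivrMr // mul1r.
  apply: le_trans (hADP _ _ N1 S') _.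
  have H2 := hADP _ _ N2 S'.
  have -> : 2 * eps = eps + eps by rewrite mulr2n mulrDl mul1r.
  rewrite expRD.
  have Hp := expR_ge0 eps.
  have : expR eps * Prob (A wm) S' <= expR eps * (expR eps * Prob (A (wx R x')) S' + delta).
    by apply: ler_wpM2l.
  rewrite /Prob; move=> H3; apply: le_trans (lerD H3 (lexx delta)) _.
by rewrite mulrDr mulrA mulrDl mul1r -!addrA [delta + _]addrC.
- move=> x.
  under eq_bigr do rewrite mulr_suml.
  have -> : \sum_y \sum_(T | dec T == y) A (wx R x) T * (hamming x y)%:R
      = \sum_y \sum_(T | dec T == y) (fun T y => A (wx R x) T * (hamming x y)%:R) T y by [].
  rewrite sum_dec_all.
  have HT0 := @T0_st n x.
  have H := hAacc _ (bin x) _ HT0.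
  have E0 : tree_weight (wx R x) [set (i, x i) | i : 'I_n] = 0.
    rewrite /tree_weight big1 // => e /imsetP [i _ ->]; by rewrite /wx /= eqxx.
  rewrite E0 add0r in H; apply: le_trans H.
  apply: ler_sum => T _.
  have HA := proj1 (hAdistr (wx R x)) T.
  case: (eqVneq (A (wx R x) T) 0) => [->|HnZ]; first by rewrite !mul0r.
  apply: ler_wpM2l => //; apply: ham_le_tw; apply: st_edge; exact: hAtree HnZ.
Qed.
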